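(* Let $Q$ be a quiver and let $C\subseteq\Bbbk Q$ be a monomial subcoalgebra. Every finitely generated right coideal of $C$ is contained in a right coideal of $C$ admitting a finite linear basis whose elements are all paths in $C$.
   Context: $\Bbbk$ is a field. The path coalgebra $\Bbbk Q$ has basis all paths of $Q$ (including trivial paths, identified with vertices), with $\Delta(p)=\sum_{xy=p}x\otimes y$ ($xy$ = concatenation) and $\varepsilon(p)=1$ if $p$ is trivial, $0$ otherwise. A subcoalgebra $C\subseteq\Bbbk Q$ is monomial if it contains all vertices and arrows of $Q$ and has a linear basis consisting of paths. A right coideal of $C$ is a subspace $I$ with $\Delta(I)\subseteq I\otimes C$; it is finitely generated if it is the smallest right coideal containing some finite set. *)

(* Defs.v *)
From mathcomp Require Import all_boot all_algebra.
From Stdlib Require List.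
From Stdlib Require Import ClassicalEpsilon.
Set Implicit Arguments. Unset Strict Implicit. Unset Printing Implicit Defensive.
Import GRing.Theory.
Local Open Scope ring_scope.

Record quiver := Quiver {
  qV : Type;
  qA : Type;
  qsrc : qA -> qV;
  qtgt : qA -> qV }.

Section PathCoalgebra.
Variables (K : fieldType) (Q : quiver).

(* A raw path: a starting vertex and a list of arrows, traversed in order.
   The trivial path at v is (v, [::]). *)
Definition rpath := (qV Q * seq (qA Q))%type.

Fixpoint valid_from (v : qV Q) (s : seq (qA Q)) : Prop :=
  match s with
  | [::] => True
  | a :: s' => qsrc a = v /\ valid_from (qtgt a) s'
  end.

Fixpoint end_from (v : qV Q) (s : seq (qA Q)) : qV Q :=
  match s with
  | [::] => v
  | a :: s' => end_from (qtgt a) s'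
  end.

Definition is_path (p : rpath) : Prop := valid_from p.1 p.2.
Definition pstart (p : rpath) : qV Q := p.1.
Definition pend (p : rpath) : qV Q := end_from p.1 p.2.

(* concatenation xy: first x, then y (meaningful when pend x = pstart y) *)
Definition pconcat (x y : rpath) : rpath := (x.1, x.2 ++ y.2).

(* Vectors: functions on raw paths; elements of kQ are the finitely
   supported ones vanishing outside genuine paths (coordinates in the
   path basis). *)
Definition vec := rpath -> K.
Definition tvec := (rpath * rpath)%type -> K.

Definition in_kQ (f : vec) : Prop :=
  (exists s : seq rpath, forall p, f p <> 0 -> List.In p s) /\
  (forall p, ~ is_path p -> f p = 0).

Definition pvec (p : rpath) : vec :=
  fun q => if excluded_middle_informative (q = p) then 1 else 0.

(* comultiplication: Delta(p) = sum_{xy = p} x (x) y, extended linearly;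
   coordinates of Delta f in the basis {x (x) y} of kQ (x) kQ *)
Definition Delta (f : vec) : tvec :=
  fun xy => if excluded_middle_informative (pend xy.1 = pstart xy.2)
            then f (pconcat xy.1 xy.2) else 0.

Definition lincomb (l : seq (K * vec)) : vec :=
  fun p => foldr (fun cv acc => cv.1 * cv.2 p + acc) 0 l.

Definition etensor (x y : vec) : tvec := fun pq => x pq.1 * y pq.2.

Definition tsum (l : seq (vec * vec)) : tvec :=
  fun pq => foldr (fun xy acc => etensor xy.1 xy.2 pq + acc) 0 l.

Definition subspace (W : vec -> Prop) : Prop :=
  (forall f, W f -> in_kQ f) /\ W (fun _ => 0) /\
  (forall f g, W f -> W g -> W (fun p => f p + g p)) /\
  (forall c f, W f -> W (fun p => c * f p)).

Definition vsubset (U W : vec -> Prop) : Prop := forall f, U f -> W f.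

Definition in_tensor (U W : vec -> Prop) (t : tvec) : Prop :=
  exists l : seq (vec * vec),
    (forall xy, List.In xy l -> U xy.1 /\ W xy.2) /\
    (forall pq, t pq = tsum l pq).

Definition Delta_sub (U W : vec -> Prop) : Prop :=
  forall f, U f -> in_tensor U W (Delta f).

Definition lin_indep (B : vec -> Prop) : Prop :=
  forall l : seq (K * vec),
    List.NoDup (map snd l) -> (forall cv, List.In cv l -> B cv.2) ->
    (forall p, lincomb l p = 0) -> forall cv, List.In cv l -> cv.1 = 0.

Definition is_basis (W : vec -> Prop) (B : vec -> Prop) : Prop :=
  vsubset B W /\ lin_indep B /\
  (forall f, W f -> exists l : seq (K * vec),
       (forall cv, List.In cv l -> B cv.2) /\ (forall p, f p = lincomb l p)).

Definition subcoalgebra (C : vec -> Prop) : Prop :=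
  subspace C /\ Delta_sub C C.

Definition monomial (C : vec -> Prop) : Prop :=
  subcoalgebra C /\
  (forall v : qV Q, C (pvec (v, [::]))) /\
  (forall a : qA Q, C (pvec (qsrc a, [:: a]))) /\
  (exists B : vec -> Prop, is_basis C B /\
     forall f, B f -> exists p, is_path p /\ f = pvec p).

Definition right_coideal (C I : vec -> Prop) : Prop :=
  subspace I /\ vsubset I C /\ Delta_sub I C.

Definition fg_right_coideal (C I : vec -> Prop) : Prop :=
  right_coideal C I /\
  exists S : seq vec,
    (forall f, List.In f S -> I f) /\
    (forall J, right_coideal C J -> (forall f, List.In f S -> J f) -> vsubset I J).

End PathCoalgebra.

(* Main.v *)
Require Import Defs.
From mathcomp Require Import all_boot all_algebra.
From Stdlib Require List.
From Stdlib Require Import ClassicalEpsilon FunctionalExtensionality.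
From mathcomp Require Import ring.
Set Implicit Arguments. Unset Strict Implicit. Unset Printing Implicit Defensive.
Import GRing.Theory.

Section S.
Local Open Scope ring_scope.
Variables (K : fieldType) (Q : quiver).
Implicit Types (p q x y : rpath Q) (f g : vec K Q).

Lemma pvec_self p : pvec K p p = 1.
Proof. by rewrite /pvec; case: excluded_middle_informative. Qed.
Lemma pvec_neq p q : q <> p -> pvec K p q = 0.
Proof. by rewrite /pvec; case: excluded_middle_informative. Qed.
Lemma pvec_nz p q : pvec K p q <> 0 -> q = p.
Proof. by rewrite /pvec; case: excluded_middle_informative => // _ []. Qed.

Lemma nz_add (a b : K) : a + b <> 0 -> a <> 0 \/ b <> 0.
Proof.
move=> H; case: (eqVneq a 0) => [Ha|/eqP Ha]; last by left.
by right => Hb; apply: H; rewrite Ha Hb addr0.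
Qed.

Lemma nz_mul (a b : K) : a * b <> 0 -> b <> 0.
Proof. by move=> H Hb; apply: H; rewrite Hb mulr0. Qed.

Definition supp_in f (ps : seq (rpath Q)) := forall p, f p <> 0 -> List.In p ps.

Lemma supp_lincomb f ps : supp_in f ps ->
  exists l : seq (K * vec K Q),
    (forall cv, List.In cv l -> exists p, List.In p ps /\ cv.2 = pvec K p) /\
    (forall q, f q = lincomb l q).
Proof.
elim: ps f => [|p ps IH] f Hf.
  exists [::]; split=> // q; rewrite /lincomb /=.
  by case: (eqVneq (f q) 0) => [->|/eqP H] //; case: (Hf _ H).
pose g := fun q => f q - f p * pvec K p q.
have Hg : supp_in g ps.
  move=> q; rewrite /g.
  case: (excluded_middle_informative (q = p)) => [->|Hqp].
    by rewrite pvec_self mulr1 subrr.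
  rewrite pvec_neq // mulr0 subr0 => /Hf /= [Hpq|//].
  by case: Hqp.
have [l [Hl1 Hl2]] := IH g Hg.
exists ((f p, pvec K p) :: l); split.
  move=> cv /= [<-|Hcv]; first by exists p; split=> //; left.
  by have [p' [H1 H2]] := Hl1 _ Hcv; exists p'; split=> //; right.
move=> q; rewrite /lincomb /= -/(lincomb l q) -Hl2 /g.
by rewrite addrC subrK.
Qed.

Lemma lincomb_in (W : vec K Q -> Prop) (l : seq (K * vec K Q)) :
  subspace W -> (forall cv, List.In cv l -> W cv.2) -> W (lincomb l).
Proof.
move=> [_ [H0 [Hadd Hsc]]]; elim: l => [|cv l IH] Hl; first exact: H0.
apply: (Hadd (fun p => cv.1 * cv.2 p) (lincomb l)).
  by apply: Hsc; apply: Hl; left.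
by apply: IH => cv' H; apply: Hl; right.
Qed.

Lemma supp_in_W (W : vec K Q -> Prop) f ps : subspace W ->
  (forall p, List.In p ps -> W (pvec K p)) -> supp_in f ps -> W f.
Proof.
move=> HW Hps Hf; have [l [Hl1 Hl2]] := supp_lincomb Hf.
have -> : f = lincomb l by apply: functional_extensionality.
apply: lincomb_in => // cv /Hl1 [p [Hp ->]]; exact: Hps.
Qed.

Definition tsupp_in (t : tvec K Q) (L : seq (rpath Q * rpath Q)) :=
  forall xy, t xy <> 0 -> List.In xy L.

Lemma pvec2 x y (pq : rpath Q * rpath Q) : pq <> (x, y) ->
  pvec K x pq.1 * pvec K y pq.2 = 0.
Proof.
case: pq => a b /= H.
case: (excluded_middle_informative (a = x)) => [Ha|Ha]; last by rewrite pvec_neq // mul0r.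
case: (excluded_middle_informative (b = y)) => [Hb|Hb]; last by rewrite (pvec_neq Hb) mulr0.
by case: H; rewrite Ha Hb.
Qed.

Lemma tsupp_tensor (U W : vec K Q -> Prop) (t : tvec K Q) L :
  (forall c f, U f -> U (fun p => c * f p)) ->
  (forall xy, List.In xy L -> U (pvec K xy.1) /\ W (pvec K xy.2)) ->
  tsupp_in t L -> in_tensor U W t.
Proof.
move=> Hsc; elim: L t => [|[x y] L IH] t HL Ht.
  exists [::]; split=> // pq; rewrite /tsum /=.
  by case: (eqVneq (t pq) 0) => [->|/eqP H] //; case: (Ht _ H).
pose t' := fun pq => t pq - t (x, y) * (pvec K x pq.1 * pvec K y pq.2).
have Ht' : tsupp_in t' L.
  move=> pq; rewrite /t'.
  case: (excluded_middle_informative (pq = (x, y))) => [->|Hne].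
    by rewrite /= !pvec_self !mulr1 subrr.
  rewrite pvec2 // mulr0 subr0 => /Ht /= [Heq|//].
  by case: Hne.
have [l [Hl1 Hl2]] := IH t' (fun xy H => HL xy (or_intror H)) Ht'.
have [HUx HWy] := HL (x, y) (or_introl erefl).
exists ((fun p => t (x, y) * pvec K x p, pvec K y) :: l); split.
  move=> xy /= [<-|H]; last exact: Hl1.
  by split=> //; apply: Hsc.
move=> pq; rewrite /tsum /= -/(tsum l pq) -Hl2 /t' /etensor /=.
by rewrite -mulrA addrC subrK.
Qed.

Lemma tsum_slice2 (l : seq (vec K Q * vec K Q)) x q :
  tsum l (x, q) = lincomb (map (fun xy => (xy.1 x, xy.2)) l) q.
Proof. by elim: l => [|xy l IH] //=; rewrite /tsum /lincomb /= -/(tsum l _) IH. Qed.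

Lemma tsum_slice1 (l : seq (vec K Q * vec K Q)) y q :
  tsum l (q, y) = lincomb (map (fun xy => (xy.2 y, xy.1)) l) q.
Proof.
elim: l => [|xy l IH] //=; rewrite /tsum /lincomb /= -/(tsum l _) IH.
by rewrite /etensor /= mulrC.
Qed.

Lemma slice2 (U W : vec K Q -> Prop) t x : subspace W -> in_tensor U W t ->
  W (fun q => t (x, q)).
Proof.
move=> HW [l [Hl Ht]].
have -> : (fun q => t (x, q)) = lincomb (map (fun xy => (xy.1 x, xy.2)) l).
  by apply: functional_extensionality => q; rewrite Ht tsum_slice2.
apply: lincomb_in => //; elim: l Hl {Ht} => [|xy l IH] Hl cv //= [<-|H].
  by have [] := Hl xy (or_introl erefl).
by apply: IH H => xy' H'; apply: Hl; right.
Qed.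

Lemma slice1 (U W : vec K Q -> Prop) t y : subspace U -> in_tensor U W t ->
  U (fun q => t (q, y)).
Proof.
move=> HU [l [Hl Ht]].
have -> : (fun q => t (q, y)) = lincomb (map (fun xy => (xy.2 y, xy.1)) l).
  by apply: functional_extensionality => q; rewrite Ht tsum_slice1.
apply: lincomb_in => //; elim: l Hl {Ht} => [|xy l IH] Hl cv //= [<-|H].
  by have [] := Hl xy (or_introl erefl).
by apply: IH H => xy' H'; apply: Hl; right.
Qed.

Lemma cat_invr (T : Type) (a b c : seq T) : a ++ c = b ++ c -> a = b.
Proof.
move=> H; have Hs : size a = size b.
  by move/(congr1 size): H; rewrite !size_cat => /addIn.
by rewrite -(take_size_cat c (erefl (size a))) H take_size_cat.
Qed.

Lemma cat_invl (T : Type) (a b c : seq T) : a ++ b = a ++ c -> b = c.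
Proof.
by move=> H; rewrite -(drop_size_cat b (erefl (size a))) H drop_size_cat.
Qed.

Lemma split_in (C : vec K Q -> Prop) x y : subcoalgebra C ->
  pend x = pstart y -> C (pvec K (pconcat x y)) -> C (pvec K x) /\ C (pvec K y).
Proof.
move=> [HC HD] Hxy Hp; have Ht := HD _ Hp; split.
  have -> : pvec K x = fun q => Delta (pvec K (pconcat x y)) (q, y).
    apply: functional_extensionality => q; rewrite /Delta /=.
    case: (excluded_middle_informative (q = x)) => [->|Hq].
      rewrite pvec_self; destruct (excluded_middle_informative (pend x = pstart y)) as [Hy0|Hn] => //=; by rewrite pvec_self.
    rewrite pvec_neq //; destruct (excluded_middle_informative (pend q = pstart y)) as [Hy0|Hn] => //=.
    symmetry; apply: pvec_neq => E; apply: Hq; move: E; case: q {Hxy Hy0} => [q1 q2].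
    rewrite /pconcat /= => -[H1 H2]; by rewrite H1 (cat_invr H2); case: (x).
  exact: (slice1 _ HC Ht).
have -> : pvec K y = fun q => Delta (pvec K (pconcat x y)) (x, q).
  apply: functional_extensionality => q; rewrite /Delta /=.
  case: (excluded_middle_informative (q = y)) => [->|Hq].
    rewrite pvec_self; destruct (excluded_middle_informative (pend x = pstart y)) as [Hy0|Hn] => //=; by rewrite pvec_self.
  rewrite pvec_neq //; destruct (excluded_middle_informative (pend x = pstart q)) as [He|Hn] => //=.
  symmetry; apply: pvec_neq => E; apply: Hq; move: E He Hxy.
  case: q => [q1 q2]; rewrite /pconcat /pstart /= => -[H2] He Hxy.
  by rewrite (cat_invl H2) -He Hxy; case: (y).
exact: (slice2 _ HC Ht).
Qed.

Lemma In_map_seq (A B : Type) (h : A -> B) (a : A) (l : seq A) :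
  List.In a l -> List.In (h a) (map h l).
Proof. elim: l => [|b l IH] //= [->|H]; [by left|right; exact: IH]. Qed.

Lemma lincomb_zero (l : seq (K * vec K Q)) p :
  (forall cv, List.In cv l -> exists p', cv.2 = pvec K p' /\ cv.2 <> pvec K p) ->
  lincomb l p = 0.
Proof.
elim: l => [|cv l IH] Hl //; rewrite /lincomb /= -/(lincomb l p) IH; last first.
  by move=> cv' H; apply: Hl; right.
have [p' [E Hne]] := Hl cv (or_introl erefl).
rewrite E pvec_neq ?mulr0 ?addr0 // => Ep; apply: Hne; by rewrite E Ep.
Qed.

Lemma lincomb_pick (l : seq (K * vec K Q)) cv p :
  List.NoDup (map snd l) ->
  (forall cv, List.In cv l -> exists p', cv.2 = pvec K p') ->
  List.In cv l -> cv.2 = pvec K p -> lincomb l p = cv.1.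
Proof.
elim: l => [|cv0 l IH] //= Hnd Hl Hin Hcv.
move: Hnd => /List.NoDup_cons_iff [Hn1 Hn2].
rewrite /lincomb /= -/(lincomb l p).
case: Hin => [E|Hin].
  subst cv0; rewrite Hcv pvec_self mulr1 lincomb_zero ?addr0 //.
  move=> cv' H; have [p' E'] := Hl cv' (or_intror H); exists p'; split=> //.
  move=> E2; apply: Hn1; rewrite Hcv -E2; exact: In_map_seq.
rewrite IH //; last by move=> cv' H; apply: Hl; right.
have [p0 E0] := Hl cv0 (or_introl erefl).
rewrite E0 pvec_neq ?mulr0 ?add0r // => Ep; apply: Hn1.
by rewrite E0 -Ep -Hcv; apply: In_map_seq.
Qed.

Lemma valid_take v (s : seq (qA Q)) k : valid_from v s -> valid_from v (take k s).
Proof.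
elim: s v k => [|a s IH] v [|k] //= [H1 H2]; split=> //; exact: IH.
Qed.

Lemma take_take' (T : Type) (s : seq T) j k : exists k', take k (take j s) = take k' s.
Proof.
case: (leqP k j) => H.
  exists k; elim: s j k H => [|a s IH] [|j] [|k] //= H; by rewrite IH.
by exists j; rewrite take_oversize // size_take_min (leq_trans (geq_minl _ _)) // ltnW.
Qed.
End S.
Local Open Scope ring_scope.

Theorem lemma4p9 (K : fieldType) (Q : quiver) (C : vec K Q -> Prop) :
  monomial C ->
  forall I : vec K Q -> Prop, fg_right_coideal C I ->
  exists J : vec K Q -> Prop,
    right_coideal C J /\ vsubset I J /\
    exists ps : seq (rpath Q),
      is_basis J (fun f => exists p, List.In p ps /\ f = pvec K p) /\
      (forall p, List.In p ps -> is_path p /\ C (pvec K p)).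
Proof.
move=> [[HCs HDC] [_ [_ [B [[HBC [_ HBsp]] HBp]]]]] I [[HIs [HIC HDI]] [S [HS Hmin]]].
have HCsub : subcoalgebra C by [].
have [HCkQ [HC0 [HCadd HCsc]]] := HCs.
have inCp : forall f p, C f -> f p <> 0 -> is_path p /\ C (pvec K p).
  move=> f p Hf Hfp; split.
    case: (excluded_middle_informative (is_path p)) => // Hn.
    by case: Hfp; apply: (HCkQ f Hf).2.
  have [l [Hl Hfl]] := HBsp f Hf; rewrite Hfl in Hfp.
  elim: l Hl Hfp {Hfl} => [|cv l IH] Hl; rewrite /lincomb /=; first by [].
  rewrite -/(lincomb l p) => /nz_add [H|H].
    have [p' [_ E]] := HBp _ (Hl cv (or_introl erefl)).
    move: H; rewrite E => /nz_mul /pvec_nz ->; rewrite -E.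
    by apply: HBC; apply: Hl; left.
  by apply: IH => // cv' H'; apply: Hl; right.
have [s Hs] : exists s : seq (rpath Q), forall f, List.In f S -> supp_in f s.
  elim: S HS {Hmin} => [|f S IH] HS; first by exists [::].
  have [s1 Hs1] := IH (fun g H => HS g (or_intror H)).
  have [[s2 Hs2] _] := HCkQ f (HIC f (HS f (or_introl erefl))).
  exists (s2 ++ s1)%list => g [<-|Hg] p Hp; apply: List.in_or_app.
    by left; exact: Hs2.
  by right; exact: Hs1 Hg _ Hp.
pose good (p : rpath Q) :=
  if excluded_middle_informative (is_path p /\ C (pvec K p)) then true else false.
pose ps0 := List.filter good s.
pose pref (p : rpath Q) :=
  List.map (fun k => (p.1, take k p.2)) (List.seq 0 (size p.2).+1).
pose ps := List.flat_map pref ps0.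
have Hps0 : forall p, List.In p ps0 -> is_path p /\ C (pvec K p).
  move=> p /List.filter_In [_]; rewrite /good.
  by case: excluded_middle_informative.
have Hpref : forall (p : rpath Q) k, List.In (p.1, take k p.2) (pref p).
  move=> p k; apply/List.in_map_iff; exists (minn k (size p.2)); split.
    case: (leqP k (size p.2)) => Hk //=.
    by rewrite take_size take_oversize // ltnW.
  apply/List.in_seq; split; first by apply/leP.
  by apply/ltP; rewrite ltnS geq_minr.
have Hinv : forall x, List.In x ps -> exists p k, List.In p ps0 /\ x = (p.1, take k p.2).
  move=> x /List.in_flat_map [p [Hp /List.in_map_iff [k [Ek _]]]].
  by exists p, k.
have P1 : forall x, List.In x ps -> is_path x /\ C (pvec K x).
  move=> x /Hinv [p [k [Hp ->]]]; have [Hpp HpC] := Hps0 p Hp; split.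
    exact: valid_take.
  have := @split_in K Q C (p.1, take k p.2) (pend (p.1, take k p.2), drop k p.2) HCsub erefl.
  rewrite /pconcat /= cat_take_drop -surjective_pairing => /(_ HpC) [] //.
have P2 : forall x, List.In x ps -> forall k, List.In (x.1, take k x.2) ps.
  move=> x /Hinv [p [j [Hp ->]]] k /=.
  have [k' ->] := take_take' p.2 j k.
  by apply/List.in_flat_map; exists p; split.
have P3 : forall f, List.In f S -> supp_in f ps.
  move=> f Hf p Hp; apply/List.in_flat_map; exists p; split.
    apply/List.filter_In; split; first exact: Hs Hf _ Hp.
    rewrite /good; case: excluded_middle_informative => // Hn; case: Hn.
    exact: inCp (HIC f (HS f Hf)) Hp.
  by have := Hpref p (size p.2); rewrite take_size -surjective_pairing.
pose J := fun f : vec K Q => supp_in f ps /\ forall p, ~ is_path p -> f p = 0.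
have HJsub : subspace J.
  split; first by move=> f [H1 H2]; split=> //; exists ps.
  split; first by split.
  split.
    move=> f g [Hf1 Hf2] [Hg1 Hg2]; split.
      by move=> p /nz_add [/Hf1|/Hg1].
    by move=> p Hp; rewrite Hf2 // Hg2 // addr0.
  move=> c f [Hf1 Hf2]; split; first by move=> p /nz_mul /Hf1.
  by move=> p Hp; rewrite Hf2 // mulr0.
have HJpv : forall x, List.In x ps -> J (pvec K x).
  move=> x Hx; split; first by move=> q /pvec_nz ->.
  move=> q Hq; apply: pvec_neq => E; apply: Hq; rewrite E; exact: (P1 x Hx).1.
have HJC : vsubset J C.
  move=> f [Hf _]; apply: (supp_in_W HCs _ Hf); by move=> p /P1 [].
pose Lf := fun p : rpath Q =>
      List.map (fun k => ((p.1, take k p.2), (end_from p.1 (take k p.2), drop k p.2)))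
        (List.seq 0 (size p.2).+1).
have HLf : forall (p : rpath Q) k, (k <= size p.2)%N ->
    List.In ((p.1, take k p.2), (end_from p.1 (take k p.2), drop k p.2)) (Lf p).
  move=> p k Hk; rewrite /Lf; apply/List.in_map_iff; exists k; split => //.
  apply/List.in_seq; split; first by apply/leP.
  by apply/ltP.
have HJD : Delta_sub J C.
  move=> f [Hf1 Hf2].
  apply: (tsupp_tensor (L := List.flat_map Lf ps)).
  - by move=> c g Hg; apply: HJsub.2.2.2.
  - move=> xy /List.in_flat_map [p [Hp /List.in_map_iff [k [<- _]]]] /=; split.
      by apply: HJpv; apply: (P2 p Hp).
    have := @split_in K Q C (p.1, take k p.2) (pend (p.1, take k p.2), drop k p.2) HCsub erefl.
    rewrite /pconcat /= cat_take_drop -surjective_pairing => /(_ (P1 p Hp).2) [] //.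
  - move=> [x y]; rewrite /Delta /=.
    destruct (excluded_middle_informative (pend x = pstart y)) as [E|E] => //= /Hf1 Hp.
    have Hsz : (size x.2 <= size (pconcat x y).2)%N by rewrite /pconcat /= size_cat leq_addr.
    have Hm := HLf (pconcat x y) (size x.2) Hsz.
    suff Exy : (((pconcat x y).1, take (size x.2) (pconcat x y).2),
      (end_from (pconcat x y).1 (take (size x.2) (pconcat x y).2),
       drop (size x.2) (pconcat x y).2)) = (x, y).
      by rewrite Exy in Hm; apply/List.in_flat_map; exists (pconcat x y).
    move: E; case: x {Hp Hm Hsz} => [x1 x2]; case: y => [y1 y2].
    rewrite /pconcat /pend /pstart /= => <-; by rewrite take_size_cat // drop_size_cat.
have HJrc : right_coideal C J by split.
exists J; split=> //; split.
  apply: Hmin => // f Hf; split; first exact: P3.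
  exact: (HCkQ f (HIC f (HS f Hf))).2.
exists ps; split; last exact: P1.
split; first by move=> f [p [Hp ->]]; exact: HJpv.
split.
  move=> l Hnd Hl Hz cv Hcv.
  have [p [_ Ep]] := Hl cv Hcv.
  rewrite -(lincomb_pick Hnd _ Hcv Ep) //.
  by move=> cv' /Hl [p' [_ E']]; exists p'.
move=> f [Hf _]; have [l [Hl1 Hl2]] := supp_lincomb Hf.
by exists l; split.
Qed.
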